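(* Let $X\in L^\infty$ and let $\mathcal{G}\subseteq\mathcal{F}$ be a sub-$\sigma$-field. A random variable $Y$ belongs to $\mathbb{E}[X\mid\mathcal{G}]$ if and only if $Y\in L^\infty(\mathcal{G})$ and $|X-Y|\le\varepsilon(X,\mathcal{G})$ a.s.
   Context: $\mathbb{K}$ is a local field with non-archimedean absolute value $|\cdot|$. $(\Omega,\mathcal{F},\mathbb{P})$ is a probability space; $L^\infty$ is the space of $\mathbb{K}$-valued random variables $X$ with $\operatorname{ess\,sup}|X|<\infty$; $L^\infty(\mathcal{G})$ its $\mathcal{G}$-measurable subspace. For a non-negative real random variable $S$, $\operatorname{ess\,sup}\{S\mid\mathcal{G}\}:=\sup_{p\ge1}\mathbb{E}[S^p\mid\mathcal{G}]^{1/p}$ (usual real conditional expectation), $\|X\|_\mathcal{G}:=\operatorname{ess\,sup}\{|X|\mid\mathcal{G}\}$, and $\mathbb{E}[X\mid\mathcal{G}]:=\{Y\in L^\infty(\mathcal{G}): \|X-Y\|_\mathcal{G}\le\|X-Z\|_\mathcal{G}\text{ a.s. for all }Z\in L^\infty(\mathcal{G})\}$. This set is non-empty, and $\|X-Y\|_\mathcal{G}$ is a.s. the same for all $Y\in\mathbb{E}[X\mid\mathcal{G}]$; this common random variable is denoted $\varepsilon(X,\mathcal{G})$. *)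

(* Defs.v *)
From HB Require Import structures.
From mathcomp Require Import all_boot all_order all_algebra.
From mathcomp Require Import all_classical all_reals all_analysis.
Set Implicit Arguments. Unset Strict Implicit. Unset Printing Implicit Defensive.
Import Order.TTheory GRing.Theory Num.Theory.
Local Open Scope classical_set_scope.
Local Open Scope ring_scope.

Record nonarch_local_field (R : realType) (K : fieldType) (abs : K -> R) : Prop := {
  nlf_ge0 : forall x, 0 <= abs x;
  nlf_abs0 : forall x, abs x = 0 <-> x = 0;
  nlf_absM : forall x y, abs (x * y) = abs x * abs y;
  nlf_ultra : forall x y, abs (x + y) <= Num.max (abs x) (abs y);
  nlf_discrete : exists pi : K, 0 < abs pi < 1 /\
      forall x, x != 0 -> exists n : int, abs x = abs pi ^ n;
  nlf_finite_residue : exists s : seq K,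
      forall x, abs x <= 1 -> exists2 r, r \in s & abs (x - r) < 1;
  nlf_complete : forall u : nat -> K,
      (forall e : R, 0 < e -> exists N, forall m n, (N <= m)%N -> (N <= n)%N ->
          abs (u m - u n) < e) ->
      exists l, forall e : R, 0 < e -> exists N, forall n, (N <= n)%N -> abs (u n - l) < e }.

Section defs.
Context (d : measure_display) (T : measurableType d) (R : realType).
Context (P : probability T R) (K : fieldType) (abs : K -> R).

(** measurability of a K-valued map w.r.t. a family of sets [S]
    (the Borel sigma-algebra of K is generated by the open balls) *)
Definition measK (S : set (set T)) (X : T -> K) :=
  forall (a : K) (r : R), S [set w | abs (X w - a) < r].

Definition measR (S : set (set T)) (f : T -> R) :=
  forall B : set R, measurable B -> S (f @^-1` B).

Definition Linf (S : set (set T)) (X : T -> K) :=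
  measK S X /\ exists M : R, {ae P, forall w, abs (X w) <= M}.

Definition cond_exp_version (G : set (set T)) (f Z : T -> R) :=
  P.-integrable setT (EFin \o f) /\ measR G Z /\ P.-integrable setT (EFin \o Z) /\
  forall A, G A -> (\int[P]_(w in A) (Z w)%:E = \int[P]_(w in A) (f w)%:E)%E.

(** [E] is a version of ess sup{S | G} = sup_{p >= 1} E[S^p | G]^(1/p) *)
Definition cond_esssup_version (G : set (set T)) (S : T -> R) (E : T -> \bar R) :=
  exists Z : nat -> T -> R,
    (forall p, (1 <= p)%N -> cond_exp_version G (fun w => S w ^+ p) (Z p)) /\
    forall w, E w = ereal_sup [set ((Z p w) `^ (p%:R^-1))%:E | p in [set p : nat | (1 <= p)%N]].

Definition condnorm_version (G : set (set T)) (X : T -> K) (E : T -> \bar R) :=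
  cond_esssup_version G (fun w => abs (X w)) E.

Definition condE (G : set (set T)) (X Y : T -> K) :=
  Linf G Y /\
  forall Z, Linf G Z -> forall e1 e2,
    condnorm_version G (fun w => X w - Y w) e1 ->
    condnorm_version G (fun w => X w - Z w) e2 ->
    {ae P, forall w, (e1 w <= e2 w)%E}.

End defs.

(* Main.v *)
Require Import Defs.
From HB Require Import structures.
From mathcomp Require Import all_boot all_order all_algebra.
From mathcomp Require Import all_classical all_reals all_analysis.
From mathcomp Require Import measurable_realfun.
Import Order.TTheory GRing.Theory Num.Theory.
Local Open Scope classical_set_scope.
Local Open Scope ring_scope.

Lemma expr_small (R : realType) (a e : R) : 0 <= a < 1 -> 0 < e -> exists n : nat, a ^+ n < e.
Proof.
move=> /andP[a0 a1] e0.
have ha : `|a| < 1 by rewrite ger0_norm.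
have := cvgr_dist_lt _ _ (cvg_expr ha) _ e0.
case=> N _ HN; exists N; have := HN N (leqnn N).
by rewrite /= sub0r normrN ger0_norm ?exprn_ge0.
Qed.

Section absfacts.
Context (R : realType) (K : fieldType) (abs : K -> R) (hK : nonarch_local_field abs).

Lemma abs0 : abs 0 = 0.
Proof. by apply/(nlf_abs0 hK). Qed.

Lemma abs1 : abs 1 = 1.
Proof.
have h := nlf_absM hK 1 1; rewrite mulr1 in h.
have h0 : abs 1 != 0 by apply/eqP => /(nlf_abs0 hK)/eqP; rewrite oner_eq0.
by apply: (mulfI h0); rewrite mulr1 -h.
Qed.

Lemma absN x : abs (- x) = abs x.
Proof.
have hm : abs (-1) = 1.
  have h := nlf_absM hK (-1) (-1); rewrite mulrNN mulr1 abs1 in h.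
  have := nlf_ge0 hK (-1).
  have : abs (-1) ^+ 2 = 1 by rewrite expr2 -h.
  move/eqP; rewrite sqrf_eq1 => /orP[/eqP -> //|/eqP ->].
  by rewrite ler0N1.
by rewrite -mulN1r (nlf_absM hK) hm mul1r.
Qed.

Lemma absB x y : abs (x - y) = abs (y - x).
Proof. by rewrite -absN opprB. Qed.

Lemma absX x n : abs (x ^+ n) = abs x ^+ n.
Proof. by elim: n => [|n IH]; rewrite ?abs1 // !exprS (nlf_absM hK) IH. Qed.

Lemma absV x : x != 0 -> abs (x^-1) = (abs x)^-1.
Proof.
move=> x0; have h := nlf_absM hK x x^-1; rewrite mulfV // abs1 in h.
have hx : abs x != 0 by apply/eqP => /(nlf_abs0 hK)/eqP; rewrite (negbTE x0).
by apply: (mulfI hx); rewrite -h mulfV.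
Qed.

Lemma abs_ultra3 x y z : abs (x - z) <= Num.max (abs (x - y)) (abs (y - z)).
Proof. by have := nlf_ultra hK (x - y) (y - z); rewrite addrA subrK. Qed.

End absfacts.
Arguments abs0 {R K abs}.
Arguments abs1 {R K abs}.
Arguments absN {R K abs}.
Arguments absB {R K abs}.
Arguments absX {R K abs}.
Arguments absV {R K abs}.
Arguments abs_ultra3 {R K abs}.


Section dense.
Context (R : realType) (K : fieldType) (abs : K -> R) (hK : nonarch_local_field abs).
Variables (pi : K) (hpi : 0 < abs pi < 1)
  (hdisc : forall x, x != 0 -> exists n : int, abs x = abs pi ^ n)
  (s : seq K) (hs : forall x, abs x <= 1 -> exists2 r, r \in s & abs (x - r) < 1).

Definition dv (l : seq nat) : K := foldr (fun i acc => nth 0 s i + pi * acc) 0 l.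

Lemma small_le_pi z : abs z < 1 -> abs z <= abs pi.
Proof.
move=> hz; have [->|z0] := eqVneq z 0; first by rewrite (abs0 hK) (ltW (proj1 (andP hpi))).
case: (hdisc z z0) => [[k|k] hk]; rewrite hk in hz *.
- case: k hk hz => [|k] hk hz; first by rewrite expr0z ltxx in hz.
  rewrite -exprnP; case/andP: hpi => p0 p1.
  rewrite exprS; apply: ler_piMr; first exact: ltW.
  by apply: exprn_ile1; exact: ltW.
- exfalso; move: hz; rewrite NegzE -exprnN invf_lt1 ?exprn_gt0 //.
  + case/andP: hpi => p0 p1; by rewrite ltNge (exprn_ile1 _ (ltW p0) (ltW p1)).
  + by case/andP: hpi.
Qed.

Lemma approx m x : abs x <= 1 -> exists l, abs (x - dv l) <= abs pi ^+ m.
Proof.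
elim: m x => [|m IH] x hx; first by exists [::]; rewrite /= subr0 expr0.
case: (hs x hx) => r rs hr.
have pi0 : pi != 0 by apply/eqP => p0; move: hpi; rewrite p0 (abs0 hK) ltxx.
have api0 : 0 < abs pi by case/andP: hpi.
set y := (x - r) / pi.
have hy : abs y <= 1.
  rewrite /y (nlf_absM hK) (absV hK) // ler_pdivrMr // mul1r.
  exact: small_le_pi.
case: (IH y hy) => l hl.
exists (index r s :: l) => /=; rewrite nth_index //.
have -> : x - (r + pi * dv l) = pi * (y - dv l).
  by rewrite mulrBr /y mulrCA mulfV // mulr1 opprD addrA.
by rewrite (nlf_absM hK) exprS ler_pM2l.
Qed.

Lemma dense_seq : exists ds : nat -> K,
  forall x (e : R), 0 < e -> exists n, abs (x - ds n) < e.
Proof.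
pose ds n := if (unpickle n : option (nat * seq nat)) is Some (k, l)
  then dv l / pi ^+ k else 0.
exists ds => x e e0.
have pi0 : pi != 0 by apply/eqP => p0; move: hpi; rewrite p0 (abs0 hK) ltxx.
have api0 : 0 < abs pi by case/andP: hpi.
have hpi' : 0 <= abs pi < 1 by case/andP: hpi => a b; rewrite ltW.
have ax := nlf_ge0 hK x.
have h1x : 0 < 1 + abs x by rewrite ltr_pwDl.
have hinv : 0 < (1 + abs x)^-1 by rewrite invr_gt0.
have [k hk] := @expr_small R _ _ hpi' hinv.
have hk' : abs (x * pi ^+ k) <= 1.
  rewrite (nlf_absM hK) (absX hK) mulrC.
  apply: (@le_trans _ _ ((1 + abs x)^-1 * abs x)).
    by rewrite ler_wpM2r // ltW.
  by rewrite mulrC ler_pdivrMr // mul1r lerDr.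
have [m hm] := @expr_small R _ _ hpi' (mulr_gt0 e0 (exprn_gt0 k api0)).
case: (approx m _ hk') => l hl.
exists (pickle (k, l)); rewrite /ds pickleK.
have pk0 : pi ^+ k != 0 by rewrite expf_neq0.
have -> : x - dv l / pi ^+ k = (x * pi ^+ k - dv l) / pi ^+ k.
  by rewrite mulrBl mulfK.
rewrite (nlf_absM hK) (absV hK) // (absX hK) ltr_pdivrMr ?exprn_gt0 //.
exact: le_lt_trans hl hm.
Qed.

End dense.

Section measS.
Context (d : measure_display) (T : measurableType d) (R : realType)
  (K : fieldType) (abs : K -> R) (hK : nonarch_local_field abs).

Lemma measS (X Y : T -> K) (G : set (set T)) :
  G `<=` measurable -> measK abs measurable X -> measK abs G Y ->
  measurable_fun setT (fun w => abs (X w - Y w)).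
Proof.
move=> hGF mX mY.
have [pi [hpi hdisc]] := nlf_discrete hK.
have [s hs] := nlf_finite_residue hK.
have [ds hds] := @dense_seq _ _ _ hK _ hpi hdisc _ hs.
apply: (measurability (@measurable_realfun.RGenInftyO.G R)) => [|/= _ [_] [r] -> <-].
  exact: measurable_realfun.RGenInftyO.measurableE.
have -> : setT `&` (fun w => abs (X w - Y w)) @^-1` `]-oo, r[ =
  \bigcup_n ([set w | abs (X w - ds n) < r] `&` [set w | abs (Y w - ds n) < r]).
  apply/seteqP; split => w /=.
    rewrite in_itv /= => -[_ hw].
    have r0 : 0 < r by exact: le_lt_trans (nlf_ge0 hK _) hw.
    have [n hn] := hds (X w) r r0.
    exists n => //; split => //=.
    apply: le_lt_trans (abs_ultra3 hK _ (X w) _) _.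
    by rewrite gt_max hn (absB hK (Y w)) hw.
  move=> [n _ [h1 h2]]; rewrite in_itv /=; split => //.
  apply: le_lt_trans (abs_ultra3 hK _ (ds n) _) _.
  by rewrite gt_max h1 absB.
apply: bigcup_measurable => n _; apply: measurableI; first exact: mX.
exact/hGF/mY.
Qed.

End measS.

Section condexp.
Context (d : measure_display) (T : measurableType d) (R : realType)
  (P : probability T R) (G : set (set T))
  (hG : sigma_algebra setT G) (hGF : G `<=` measurable).

Local Notation TG := (g_sigma_algebraType G).

Definition idG : T -> TG := id.

Lemma idG_meas : measurable_fun setT idG.
Proof.
move=> _ B mB; rewrite setTI.
have : G B by rewrite -(measurable_g_measurableTypeE hG).
exact: hGF.
Qed.

HB.instance Definition _ := isMeasurableFun.Build _ _ T TG idG idG_meas.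

Definition muG := distribution P idG.

Definition nuG {f : T -> \bar R} (intf : P.-integrable setT f) : set TG -> \bar R :=
  fun A => (\int[P]_(w in A) f w)%E.

Section nuG.
Variables (f : T -> \bar R) (intf : P.-integrable setT f).

Let nuG0 : nuG intf set0 = 0%E.
Proof. by rewrite /nuG integral_set0. Qed.

Let measTG (A : set TG) : measurable A -> d.-measurable (A : set T).
Proof. by move=> mA; have := idG_meas measurableT _ mA; rewrite setTI. Qed.

Let nuG_fin A : measurable A -> nuG intf A \is a fin_num.
Proof.
move=> mA; rewrite /nuG; apply: integrable_fin_num; first exact: (measTG _ mA).
exact: (integrableS measurableT (measTG _ mA) (@subsetT _ _) intf).
Qed.

Let nuG_sadd : semi_sigma_additive (nuG intf).
Proof.
move=> F mF tF mUF.
exact: (@charge_semi_sigma_additive _ _ _ (induced_charge intf) F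
  (fun n => measTG _ (mF n)) tF (measTG _ mUF)).
Qed.

HB.instance Definition _ := isCharge.Build _ _ _ (nuG intf) nuG0 nuG_fin nuG_sadd.

Lemma nuG_dom : nuG intf `<< muG.
Proof.
apply/null_content_dominatesP => A mA muA.
rewrite /nuG; apply: null_set_integral.
- exact: (measTG _ mA).
- exact: (measurable_funS measurableT (@subsetT _ _) (measurable_int _ intf)).
- exact: muA.
Qed.

End nuG.

Lemma cond_exp_exists (f : T -> R) : P.-integrable setT (EFin \o f) ->
  exists Z, cond_exp_version P G f Z.
Proof.
move=> intf.
have dom := @nuG_dom _ intf.
set g := Radon_Nikodym (nuG intf) muG.
have gint := Radon_Nikodym_integrable dom.
have gfin := Radon_Nikodym_fin_num _ dom.
have mg := measurable_int _ gint.
exists (fun w => fine (g w)).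
have eg : EFin \o (fun w => fine (g w)) = g.
  by apply/funext => w /=; rewrite fineK // gfin.
split => //; split.
  move=> B mB.
  have mZ : measurable_fun setT (fine \o g) by apply: measurableT_comp.
  have := mZ measurableT _ mB.
  by rewrite (measurable_g_measurableTypeE hG) setTI; apply.
have mgT : measurable_fun (setT : set T) (g \o idG) := measurableT_comp mg idG_meas.
have hint : P.-integrable setT (g \o idG).
  apply/integrableP; split => //.
  move/integrableP: gint => [_].
  rewrite /muG /distribution (ge0_integral_pushforward idG_meas) //.
  by apply: measurableT_comp => //; exact: abse_measurable.
split.
  apply: (eq_integrable measurableT _ _ _ hint) => w _ /=.
  by rewrite fineK // gfin.
move=> A GA.
transitivity (\int[P]_(w in A) g w)%E.
  by apply: eq_integral => w _ /=; rewrite fineK // gfin.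
have mA : measurable (A : set TG) by rewrite (measurable_g_measurableTypeE hG).
transitivity (\int[muG]_(w in A) g w)%E.
  rewrite /muG /distribution (integral_pushforward idG_meas) //.
  change (P.-integrable A (g \o idG)).
  apply: (integrableS measurableT _ _ hint) => //. exact: hGF.
by rewrite -Radon_Nikodym_integral.
Qed.

End condexp.

Section powlemmas.
Context (R : realType).

Lemma powR_inv_exp (c : R) (p : nat) : (1 <= p)%N -> 0 <= c -> (c ^+ p) `^ (p%:R^-1) = c.
Proof.
move=> p1 c0.
have hp : (p%:R : R) != 0 by rewrite pnatr_eq0 -lt0n.
by rewrite -powR_mulrn // -powRrM mulfV // powRr1.
Qed.

Lemma exp_powR_inv (z : R) (p : nat) : (1 <= p)%N -> 0 <= z -> (z `^ (p%:R^-1)) ^+ p = z.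
Proof.
move=> p1 z0.
have hp : (p%:R : R) != 0 by rewrite pnatr_eq0 -lt0n.
by rewrite -powR_mulrn ?powR_ge0 // -powRrM mulVf // powRr1.
Qed.

Lemma powinv_le (z c : R) (p : nat) : (1 <= p)%N -> 0 <= z -> 0 <= c ->
  z <= c ^+ p -> z `^ (p%:R^-1) <= c.
Proof.
move=> p1 z0 c0 hz.
have hq : 0 <= (p%:R : R)^-1 by rewrite invr_ge0.
rewrite -[X in _ <= X](powR_inv_exp _ _ p1 c0).
apply: (ge0_ler_powR hq) => //; rewrite nnegrE //; exact: exprn_ge0.
Qed.

Lemma le_exp_of_powinv (z c : R) (p : nat) : (1 <= p)%N -> 0 <= z -> 0 <= c ->
  z `^ (p%:R^-1) <= c -> z <= c ^+ p.
Proof.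
move=> p1 z0 c0 hz.
rewrite -(exp_powR_inv _ _ p1 z0).
apply: lerXn2r => //; rewrite nnegrE //; exact: powR_ge0.
Qed.

End powlemmas.

Section versions.
Context (d : measure_display) (T : measurableType d) (R : realType)
  (P : probability T R) (G : set (set T))
  (hG : sigma_algebra setT G) (hGF : G `<=` measurable).

Local Notation TG := (g_sigma_algebraType G).

Lemma GmE (A : set T) : G A <-> measurable (A : set TG).
Proof. by rewrite (measurable_g_measurableTypeE hG). Qed.

Lemma GI A B : G A -> G B -> G (A `&` B).
Proof. by move=> /GmE hA /GmE hB; apply/GmE; exact: measurableI. Qed.

Lemma Gbigcap (F : nat -> set T) : (forall n, G (F n)) -> G (\bigcap_n F n).
Proof.
move=> hF; apply/GmE; apply: (@bigcapT_measurable _ TG) => n.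
exact/GmE.
Qed.

Lemma GT : G setT.
Proof. by apply/GmE; exact: (@measurableT _ TG). Qed.

Lemma Gpre (Z : T -> R) (B : set R) : measR G Z -> measurable B -> G (Z @^-1` B).
Proof. by move=> hZ mB; exact: hZ. Qed.

Lemma ae_count (I : countType) (Q : I -> T -> Prop) :
  (forall i, {ae P, forall w, Q i w}) -> {ae P, forall w, forall i, Q i w}.
Proof.
move=> h.
have := @ae_foralln _ _ _ P (fun n w => if (unpickle n : option I) is Some i then Q i w else True).
case.
  by move=> n; case: (unpickle n) => [i|]; [exact: h|exact: aeW].
move=> N [mN PN sub]; exists N; split => // w /= hw; apply: sub => /= hall.
apply: hw => i; have := hall (pickle i); by rewrite pickleK.
Qed.

Lemma ae_and {Q1 Q2 : T -> Prop} : {ae P, forall w, Q1 w} -> {ae P, forall w, Q2 w} ->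
  {ae P, forall w, Q1 w /\ Q2 w}.
Proof.
move=> h1 h2; have := @ae_count bool (fun b w => if b then Q1 w else Q2 w).
case; first by case.
move=> N [mN PN sub]; exists N; split => // w /= hw; apply: sub => /= hall.
by apply: hw; split; [exact: (hall true)|exact: (hall false)].
Qed.

Lemma ae_mono {Q1 Q2 : T -> Prop} : (forall w, Q1 w -> Q2 w) ->
  {ae P, forall w, Q1 w} -> {ae P, forall w, Q2 w}.
Proof.
move=> h [N [mN PN sub]]; exists N; split => // w /= hw; apply: sub => /= h1.
by apply: hw; exact: h.
Qed.

Local Open Scope ereal_scope.

Lemma ae_le_integral (D : set T) (f g : T -> \bar R) : measurable D ->
  P.-integrable D f -> P.-integrable D g ->
  {ae P, forall w, D w -> f w <= g w} ->
  \int[P]_(w in D) f w <= \int[P]_(w in D) g w.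
Proof.
move=> mD intf intg [N [mN PN sub]].
rewrite (negligible_integral mN mD intf PN) (negligible_integral mN mD intg PN).
apply: le_integral.
- exact: measurableD.
- exact: (integrableS mD (measurableD mD mN) (@subDsetl _ _ _) intf).
- exact: (integrableS mD (measurableD mD mN) (@subDsetl _ _ _) intg).
move=> w /set_mem [Dw Nw].
apply: contrapT => hw; apply: Nw; apply: sub => /= h; apply: hw; exact: h.
Qed.

Local Close Scope ereal_scope.
Lemma Gpre_gt (Z : T -> R) a : measR G Z -> G [set w | a < Z w].
Proof.
move=> hZ; have -> : [set w | a < Z w] = Z @^-1` `]a, +oo[.
  by apply/seteqP; split => w /=; rewrite in_itv /= andbT.
exact: hZ.
Qed.

Lemma Gpre_lt (Z : T -> R) a : measR G Z -> G [set w | Z w < a].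
Proof.
move=> hZ; have -> : [set w | Z w < a] = Z @^-1` `]-oo, a[.
  by apply/seteqP; split => w /=; rewrite in_itv /=.
exact: hZ.
Qed.

Lemma P_fin (A : set T) : measurable A -> P A = (fine (P A))%:E.
Proof. by move=> mA; rewrite fineK // fin_num_measure. Qed.

Lemma null_ae (A : set T) : measurable A -> P A = 0%E -> {ae P, forall w, ~ A w}.
Proof.
move=> mA PA; exists A; split => // w /= hw; apply: contrapT => hA; exact: hw.
Qed.

Local Open Scope ereal_scope.

Lemma ver_ub (f Z : T -> R) (B : set T) (k : R) :
  cond_exp_version P G f Z -> G B ->
  {ae P, forall w, B w -> (f w <= k)%R} -> {ae P, forall w, B w -> (Z w <= k)%R}.
Proof.
move=> [intf [mZ [intZ hZ]]] GB hf.
pose A n := B `&` [set w | (k + n.+1%:R^-1 < Z w)%R].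
have GA n : G (A n) by apply: GI => //; exact: Gpre_gt.
have PA n : P (A n) = 0.
  set a := (k + n.+1%:R^-1)%R.
  have mA := hGF _ (GA n).
  have h1 : a%:E * P (A n) <= \int[P]_(w in A n) (Z w)%:E.
    rewrite -integral_cst //; apply: le_integral => //.
    - exact: finite_measure_integrable_cst.
    - exact: (integrableS measurableT mA (@subsetT _ _) intZ).
    by move=> w /set_mem [_ /= hw]; rewrite lee_fin ltW.
  have h2 : \int[P]_(w in A n) (f w)%:E <= k%:E * P (A n).
    rewrite -integral_cst //; apply: (@ae_le_integral (A n) _ _ mA).
    - exact: (integrableS measurableT mA (@subsetT _ _) intf).
    - exact: finite_measure_integrable_cst.
    apply: ae_mono hf => w hw [Bw _]; rewrite lee_fin; exact: hw.
  rewrite hZ // in h1.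
  have := le_trans h1 h2; rewrite (P_fin _ mA) -!EFinM lee_fin.
  have p0 : (0 <= fine (P (A n)))%R by apply: fine_ge0; exact: measure_ge0.
  rewrite -subr_ge0 -mulrBl /a opprD addrA subrr add0r mulNr oppr_ge0 pmulr_rle0 ?invr_gt0 //.
  move=> hp; apply/eqP; rewrite eqe eq_le hp p0 //.
have := @ae_count nat (fun n w => ~ A n w) (fun n => null_ae _ (hGF _ (GA n)) (PA n)).
apply: ae_mono => w hw Bw; rewrite leNgt; apply/negP => /ltr_add_invr [n hn].
exact: (hw n).
Qed.

Lemma ver_lb (f Z : T -> R) :
  cond_exp_version P G f Z -> (forall w, (0 <= f w)%R) -> {ae P, forall w, (0 <= Z w)%R}.
Proof.
move=> [intf [mZ [intZ hZ]]] hf.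
pose A n := [set w | (Z w < - n.+1%:R^-1)%R].
have GA n : G (A n) by exact: Gpre_lt.
have PA n : P (A n) = 0.
  pose a : R := (- n.+1%:R^-1)%R.
  have mA := hGF _ (GA n).
  have h1 : \int[P]_(w in A n) (Z w)%:E <= a%:E * P (A n).
    rewrite -integral_cst //; apply: le_integral => //.
    - exact: (integrableS measurableT mA (@subsetT _ _) intZ).
    - exact: finite_measure_integrable_cst.
    by move=> w /set_mem /= hw; rewrite lee_fin ltW.
  have h2 : 0 <= \int[P]_(w in A n) (f w)%:E.
    by apply: integral_ge0 => w _; rewrite lee_fin.
  rewrite hZ // in h1.
  have := le_trans h2 h1; rewrite (P_fin _ mA) -!EFinM lee_fin.
  have p0 : (0 <= fine (P (A n)))%R by apply: fine_ge0; exact: measure_ge0.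
  rewrite /a mulNr oppr_ge0 pmulr_rle0 ?invr_gt0 //.
  move=> hp; apply/eqP; rewrite eqe eq_le hp p0 //.
have := @ae_count nat (fun n w => ~ A n w) (fun n => null_ae _ (hGF _ (GA n)) (PA n)).
apply: ae_mono => w hw; rewrite leNgt; apply/negP => hlt.
have : (0 < - Z w)%R by rewrite oppr_gt0.
move=> /ltr_add_invr [n]; rewrite add0r => hn.
apply: (hw n); rewrite /A /= ltrNr; exact: hn.
Qed.




Local Close Scope ereal_scope.

Definition supE (Z : nat -> T -> R) (w : T) : \bar R :=
  ereal_sup [set ((Z p w) `^ (p%:R^-1))%:E | p in [set p : nat | (1 <= p)%N]].

Lemma supE_ge0 Z w : (0 <= supE Z w)%E.
Proof.
have h1 : [set ((Z p w) `^ (p%:R^-1))%:E | p in [set p : nat | (1 <= p)%N]]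
   ((Z 1%N w `^ (1%:R^-1))%:E) by exists 1%N.
apply: le_trans (@ereal_sup_ubound R _ _ h1).
by rewrite lee_fin powR_ge0.
Qed.

Lemma supE_leP Z w (c : R) :
  (supE Z w <= c%:E)%E <-> forall p, (1 <= p)%N -> (Z p w `^ (p%:R^-1) <= c)%R.
Proof.
split.
  move=> h p p1; rewrite -lee_fin; apply: le_trans h.
  by apply: (@ereal_sup_ubound R); exists p.
by move=> h; apply: ge_ereal_sup => _ [p p1 <-]; rewrite lee_fin; exact: h.
Qed.

Lemma G_supE Z (c : R) : (forall p, (1 <= p)%N -> measR G (Z p)) ->
  G [set w | (supE Z w <= c%:E)%E].
Proof.
move=> hZ.
have -> : [set w | (supE Z w <= c%:E)%E] =
    \bigcap_p [set w | (1 <= p)%N -> (Z p w `^ (p%:R^-1) <= c)%R].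
  apply/seteqP; split => w /=.
    by move/supE_leP => h p _; exact: h.
  by move=> h; apply/supE_leP => p p1; exact: h.
apply: Gbigcap => p.
case: p => [|p].
  have -> : [set w | (1 <= 0)%N -> (Z 0%N w `^ (0%:R^-1) <= c)%R] = setT.
    by apply/seteqP; split => w.
  exact: GT.
have -> : [set w | (1 <= p.+1)%N -> (Z p.+1 w `^ (p.+1%:R^-1) <= c)%R] =
    Z p.+1 @^-1` ([set: R] `&` (fun x => x `^ (p.+1%:R^-1)) @^-1` `]-oo, c]).
  apply/seteqP; split => w /=; first by move=> h; split => //; rewrite in_itv /=; exact: h.
  by move=> [_]; rewrite in_itv /=.
apply: (hZ p.+1 isT); apply: measurable_powR => //; exact: measurable_itv.
Qed.


Lemma key2 (S : T -> R) (Z : nat -> T -> R) (S0 : T -> R) (W : nat -> T -> R) :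
  (forall w, 0 <= S w) ->
  (forall p, (1 <= p)%N -> cond_exp_version P G (fun w => S w ^+ p) (Z p)) ->
  (forall p, (1 <= p)%N -> cond_exp_version P G (fun w => S0 w ^+ p) (W p)) ->
  {ae P, forall w, ((S w)%:E <= supE W w)%E} ->
  {ae P, forall w, (supE Z w <= supE W w)%E}.
Proof.
move=> Sge hZ hW hSle.
have hZ0 : {ae P, forall w, forall p : nat, (1 <= p)%N -> 0 <= Z p w}.
  apply: (@ae_count nat (fun p w => (1 <= p)%N -> 0 <= Z p w)) => p.
  case: p => [|p]; first by apply: aeW.
  apply: ae_mono (ver_lb _ _ (hZ p.+1 isT) (fun w => exprn_ge0 _ (Sge w))).
  by move=> w h _.
have hB : {ae P, forall w, forall pc : nat * rat, (1 <= pc.1)%N -> 0 <= (ratr pc.2 : R) ->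
    (supE W w <= (ratr pc.2)%:E)%E -> Z pc.1 w <= (ratr pc.2) ^+ pc.1}.
  apply: (@ae_count _ (fun pc w => (1 <= pc.1)%N -> 0 <= (ratr pc.2 : R) ->
    (supE W w <= (ratr pc.2)%:E)%E -> Z pc.1 w <= (ratr pc.2) ^+ pc.1)) => -[p c] /=.
  case: p => [|p]; first by apply: aeW.
  case: (boolP (0 <= (ratr c : R))) => c0; last by apply: aeW.
  have GB := @G_supE W (ratr c) (fun p p1 => (hW p p1).2.1).
  have := @ver_ub (fun w => S w ^+ p.+1) (Z p.+1) _ (ratr c ^+ p.+1) (hZ p.+1 isT) GB.
  case.
    apply: ae_mono hSle => w h /= hw.
    apply: lerXn2r; rewrite ?nnegrE //.
    by rewrite -lee_fin; exact: le_trans h hw.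
  move=> N [mN PN sub]; exists N; split => // w /= hw; apply: sub => /= h.
  by apply: hw => _ _ hwc; exact: h.
apply: ae_mono (ae_and hZ0 hB) => w [h0 hb].
apply: ge_ereal_sup => _ [p p1 <-].
have x0 : 0 <= Z p w `^ (p%:R^-1) by exact: powR_ge0.
rewrite leNgt; apply/negP => hlt.
have e0 := supE_ge0 W w.
move: hlt e0 hb; case: (supE W w) => [r| |] //= hlt e0 hb.
rewrite lte_fin in hlt; rewrite lee_fin in e0.
have [c] := rat_in_itvoo hlt; rewrite in_itv /= => /andP[rc cx].
have c0 : 0 <= (ratr c : R) by apply: le_trans e0 (ltW rc).
have := hb (p, c) p1 c0; rewrite /= lee_fin => /(_ (ltW rc)) hz.
have := @powinv_le R _ _ _ p1 (h0 p p1) c0 hz.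
by rewrite leNgt cx.
Qed.


Lemma key (S : T -> R) (Z : nat -> T -> R) :
  (forall w, 0 <= S w) -> measurable_fun setT S ->
  (forall p, (1 <= p)%N -> cond_exp_version P G (fun w => S w ^+ p) (Z p)) ->
  {ae P, forall w, ((S w)%:E <= supE Z w)%E}.
Proof.
move=> Sge mS hZ.
have hZ0 : {ae P, forall w, forall p : nat, (1 <= p)%N -> 0 <= Z p w}.
  apply: (@ae_count nat (fun p w => (1 <= p)%N -> 0 <= Z p w)) => p.
  case: p => [|p]; first by apply: aeW.
  apply: ae_mono (ver_lb _ _ (hZ p.+1 isT) (fun w => exprn_ge0 _ (Sge w))).
  by move=> w h _.
have hB : {ae P, forall w, forall cd : rat * rat, 0 <= (ratr cd.1 : R) -> 0 < (ratr cd.2 : R) ->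
   ~ ((supE Z w <= (ratr cd.1)%:E)%E /\ ratr cd.1 + ratr cd.2 <= S w)}.
  apply: (@ae_count _ (fun cd w => 0 <= (ratr cd.1 : R) -> 0 < (ratr cd.2 : R) ->
   ~ ((supE Z w <= (ratr cd.1)%:E)%E /\ ratr cd.1 + ratr cd.2 <= S w))) => -[c dl] /=.
  case: (boolP (0 <= (ratr c : R))) => c0; last by apply: aeW.
  case: (boolP (0 < (ratr dl : R))) => d0; last by apply: aeW.
  move: c0 d0; set cr : R := ratr c; set dr : R := ratr dl => c0 d0.
  pose A := [set w | (supE Z w <= cr%:E)%E].
  pose B := A `&` [set w | cr + dr <= S w].
  have GA : G A := @G_supE Z cr (fun p p1 => (hZ p p1).2.1).
  have mA := hGF _ GA.
  have mB : measurable B.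
    apply: measurableI => //.
    have -> : [set w | cr + dr <= S w] = setT `&` S @^-1` `[cr + dr, +oo[.
      by apply/seteqP; split => w /=; rewrite in_itv /= andbT //; case.
    exact: mS.
  suff PB : P B = 0%E.
    by apply: ae_mono (null_ae _ mB PB) => w h _ _ hw; apply: h; exact: hw.
  set b := fine (P B).
  have Pb : P B = b%:E := P_fin _ mB.
  have b0 : 0 <= b by apply: fine_ge0; exact: measure_ge0.
  have b1 : b <= 1 by rewrite -lee_fin -Pb; exact: probability_le1.
  rewrite Pb; apply/eqP; rewrite eqe eq_le b0 andbT leNgt; apply/negP => bpos.
  have hcd : 0 < cr + dr by exact: ltr_wpDl.
  pose a := cr / (cr + dr).
  have ha : 0 <= a < 1.
    by rewrite /a divr_ge0 ?(ltW hcd) //= ltr_pdivrMr // mul1r ltrDl.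
  have [p hp] := @expr_small R _ _ ha bpos.
  case: p hp => [|p] hp.
    by move: hp; rewrite expr0 => /lt_le_trans/(_ b1); rewrite ltxx.
  have [intS [_ [intZ hZA]]] := hZ p.+1 isT.
  have ineq1 : (\int[P]_(w in A) ((S w ^+ p.+1)%:E) <= (cr ^+ p.+1)%:E * P A)%E.
    rewrite -hZA // -integral_cst //.
    apply: (@ae_le_integral A _ _ mA).
    - exact: (integrableS measurableT mA (@subsetT _ _) intZ).
    - exact: finite_measure_integrable_cst.
    apply: ae_mono hZ0 => w h0 Aw; rewrite lee_fin.
    apply: le_exp_of_powinv => //; first exact: h0.
    by move/supE_leP: Aw; apply.
  have ineq2 : (((cr + dr) ^+ p.+1 * b)%:E <= \int[P]_(w in A) ((S w ^+ p.+1)%:E))%E.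
    rewrite EFinM -Pb -integral_cst //.
    apply: (@le_trans _ _ (\int[P]_(w in B) ((S w ^+ p.+1)%:E))%E).
      apply: le_integral => //.
      - exact: finite_measure_integrable_cst.
      - exact: (integrableS measurableT mB (@subsetT _ _) intS).
      move=> w /set_mem [_ hw] /=; rewrite lee_fin.
      by apply: lerXn2r => //; rewrite nnegrE // ltW.
    apply: ge0_subset_integral => //.
    - apply: measurableT_comp => //; exact: measurable_funS (measurable_funX _ mS).
    - by move=> w _; rewrite lee_fin exprn_ge0.
    - by move=> w [].
  have := le_trans ineq2 ineq1.
  rewrite (P_fin _ mA) -EFinM lee_fin => h.
  have PA1 : fine (P A) <= 1 by rewrite -lee_fin -P_fin //; exact: probability_le1.
  have PA0 : 0 <= fine (P A) by apply: fine_ge0; exact: measure_ge0.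
  have h' : (cr + dr) ^+ p.+1 * b <= cr ^+ p.+1.
    apply: le_trans h _; rewrite ler_piMr ?exprn_ge0 //.
  move: hp; rewrite /a expr_div_n ltr_pdivrMr ?exprn_gt0 // mulrC => hp.
  by move: (lt_le_trans hp h'); rewrite ltxx.
apply: ae_mono hB => w hb.
rewrite leNgt; apply/negP => hlt.
have e0 := supE_ge0 Z w.
move: hlt e0 hb; case: (supE Z w) => [r| |] //= hlt e0 hb.
rewrite lte_fin in hlt; rewrite lee_fin in e0.
have [c] := rat_in_itvoo hlt; rewrite in_itv /= => /andP[rc cx].
have c0 : 0 <= (ratr c : R) by apply: le_trans e0 (ltW rc).
have : 0 < S w - ratr c by rewrite subr_gt0.
move=> /rat_in_itvoo [dl]; rewrite in_itv /= => /andP[d0 dx].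
apply: (hb (c, dl)) => //=; split; first by rewrite lee_fin ltW.
by rewrite addrC -lerBrDr ltW.
Qed.



Lemma main_aux (K : fieldType) (abs : K -> R) (hK : nonarch_local_field abs)
  (X : T -> K) (hX : Linf P abs measurable X)
  (Y0 : T -> K) (hY0 : condE P abs G X Y0)
  (eps : T -> \bar R) (heps : condnorm_version P abs G (fun w => X w - Y0 w) eps)
  (Y : T -> K) :
  condE P abs G X Y <->
  Linf P abs G Y /\ {ae P, forall w, ((abs (X w - Y w))%:E <= eps w)%E}.
Proof.
have [W [hW hWe]] := heps.
have epsE w : eps w = supE W w by rewrite hWe.
split.
- move=> [hY hmin]; split => //.
  pose S := fun w => abs (X w - Y w).
  have Sge w : 0 <= S w by exact: nlf_ge0.
  have mS : measurable_fun setT S := @measS _ _ _ _ _ hK X Y G hGF hX.1 hY.1.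
  have [M1 hM1] := hX.2.
  have [M2 hM2] := hY.2.
  pose M := Num.max (Num.max M1 M2) 0.
  have M0 : 0 <= M by rewrite /M le_max lexx orbT.
  have hSM : {ae P, forall w, S w <= M}.
    apply: ae_mono (ae_and hM1 hM2) => w [h1 h2].
    apply: le_trans (nlf_ultra hK (X w) (- Y w)) _.
    rewrite (absN hK) /M ge_max; apply/andP; split.
      apply: le_trans h1 _; rewrite le_max; apply/orP; left.
      by rewrite le_max lexx.
    apply: le_trans h2 _; rewrite le_max; apply/orP; left.
    by rewrite le_max lexx orbT.
  have hint p : P.-integrable setT (EFin \o (fun w => S w ^+ p)).
    apply/integrableP; split.
      by apply: measurableT_comp => //; exact: measurable_funX.
    apply: le_lt_trans (@integral_le_bound _ _ _ P setT (EFin \o (fun w => S w ^+ p)) (M ^+ p)%:E _ _ _ _) _.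
    - by [].
    - by apply: measurableT_comp => //; exact: measurable_funX.
    - by rewrite lee_fin exprn_ge0.
    - apply: ae_mono hSM => w h _ /=; rewrite lee_fin ger0_norm ?exprn_ge0 //.
      by apply: lerXn2r; rewrite ?nnegrE.
    rewrite ltey_eq fin_numM //; exact: fin_num_measure.
  have hex p : exists Zp, cond_exp_version P G (fun w => S w ^+ p) Zp :=
    @cond_exp_exists _ _ _ P G hG hGF _ (hint p).
  pose Zs p := sval (cid (hex p)).
  have hZs p : cond_exp_version P G (fun w => S w ^+ p) (Zs p) := svalP (cid (hex p)).
  have hv : condnorm_version P abs G (fun w => X w - Y w) (supE Zs).
    by exists Zs; split => // p _; exact: hZs.
  have h1 := hmin Y0 hY0.1 _ _ hv heps.
  have h2 := @key S Zs Sge mS (fun p _ => hZs p).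
  by apply: ae_mono (ae_and h1 h2) => w [a b]; exact: le_trans b a.
- move=> [hY hle]; split => // Z hZ e1 e2 h1 h2.
  have hepse2 := hY0.2 Z hZ eps e2 heps h2.
  have [Zs [hZs hZse]] := h1.
  have Sge w : 0 <= abs (X w - Y w) by exact: nlf_ge0.
  have h3 := @key2 (fun w => abs (X w - Y w)) Zs (fun w => abs (X w - Y0 w)) W Sge hZs hW.
  have h4 : {ae P, forall w, (supE Zs w <= supE W w)%E}.
    by apply: h3; apply: ae_mono hle => w; rewrite epsE.
  apply: ae_mono (ae_and h4 hepse2) => w [a b].
  by rewrite hZse -epsE in a *; exact: le_trans a b.
Qed.


End versions.

Theorem mainTheorem13 (d : measure_display) (T : measurableType d) (R : realType)
  (P : probability T R) (K : fieldType) (abs : K -> R)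
  (hK : nonarch_local_field abs)
  (G : set (set T)) (hG : sigma_algebra setT G) (hGF : G `<=` measurable)
  (X : T -> K) (hX : Linf P abs measurable X)
  (Y0 : T -> K) (hY0 : condE P abs G X Y0)
  (eps : T -> \bar R) (heps : condnorm_version P abs G (fun w => X w - Y0 w) eps)
  (Y : T -> K) :
  condE P abs G X Y <->
  Linf P abs G Y /\ {ae P, forall w, ((abs (X w - Y w))%:E <= eps w)%E}.
Proof.
exact: (@main_aux d T R P G hG hGF K abs hK X hX Y0 hY0 eps heps Y).
Qed.
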